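(* Let $0<b<1$ and $\varrho\ge0$ a function on $[0,b]$ with $\varrho/\zeta$ non-decreasing and bounded on $[0,b]$. Let $u\in C^{0,1}([0,b])$ and $\lambda\in\mathbb{R}$ satisfy $u'+(\frac1x+\widetilde\varrho)u+\lambda\zeta=0$ a.e. on $(0,b)$ with $u(0)=0$, $u(b)=1$. Then (i) $u(t)\ge t/b$ for all $t\in[0,b]$; (ii) if $\varrho\not\equiv0$ on $[0,b)$, then $u(t)>t/b$ for all $t\in(0,b)$.
   Context: $\zeta(t)=\frac2{1-t^2}$, $\widetilde\varrho(t)=t\zeta(t)+\varrho(t)$. (The function $t\mapsto t/b$ is the solution of the same problem when $\varrho\equiv0$.) *)

(* Defs.v *)
From Stdlib Require Import Reals Lra.
Open Scope R_scope.

Definition zeta (t : R) : R := 2 / (1 - t ^ 2).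

Definition rho_tilde (rho : R -> R) (t : R) : R := t * zeta t + rho t.

Definition null_set (N : R -> Prop) : Prop :=
  forall eps : R, 0 < eps ->
    exists a c : nat -> R,
      (forall n, a n <= c n) /\
      (forall x, N x -> exists n, a n <= x <= c n) /\
      (forall n, sum_f_R0 (fun k => c k - a k) n <= eps).

Definition lipschitz_on (a b : R) (u : R -> R) : Prop :=
  exists L : R, forall x y, a <= x <= b -> a <= y <= b ->
    Rabs (u x - u y) <= L * Rabs (x - y).

(* Main.v *)
Require Import Defs.
From Coquelicot Require Import Coquelicot.
From Stdlib Require Import Reals Lra Classical.
Open Scope R_scope.
Lemma lim_ser (a : nat -> R) : ex_series a -> Lim_seq (sum_n a) = Finite (Series a).
Proof. intro H. apply is_lim_seq_unique. apply (Series_correct _ H). Qed.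

Lemma series_ge_partial (a : nat -> R) n : (forall k, 0 <= a k) -> ex_series a -> sum_f_R0 a n <= Series a.
Proof.
intros Ha He.
assert (H := Lim_seq_le_loc (fun _ => sum_n a n) (sum_n a)).
rewrite Lim_seq_const, lim_ser in H by exact He.
rewrite <- sum_n_Reals. apply H.
exists n. intros m Hm. rewrite !sum_n_Reals.
induction Hm. lra. simpl. specialize (Ha (S m)). lra.
Qed.

Lemma series_le_bound (a : nat -> R) M : (forall n, sum_f_R0 a n <= M) -> 0 <= M -> Series a <= M.
Proof.
intros Ha HM.
assert (H := Lim_seq_le_loc (sum_n a) (fun _ => M)).
rewrite Lim_seq_const in H. unfold Series.
assert (H' : Rbar_le (Lim_seq (sum_n a)) M).
{ apply H. exists 0%nat. intros; rewrite sum_n_Reals; apply Ha. }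
destruct (Lim_seq (sum_n a)); simpl in *; lra.
Qed.

Lemma ex_series_bound (a : nat -> R) M : (forall k, 0 <= a k) -> (forall n, sum_f_R0 a n <= M) -> ex_series a.
Proof.
intros Ha HM. apply ex_series_Reals_1. apply growing_cv.
- intro n. simpl. specialize (Ha (S n)). lra.
- exists M. intros x [i ->]. apply HM.
Qed.

Lemma series_ge_term (a : nat -> R) n : (forall k, 0 <= a k) -> ex_series a -> a n <= Series a.
Proof.
intros Ha He. apply Rle_trans with (sum_f_R0 a n); [|now apply series_ge_partial].
destruct n. simpl; lra. simpl. assert (0 <= sum_f_R0 a n) by (apply cond_pos_sum; auto). lra.
Qed.
Definition dini (f : R -> R) x := forall e, 0 < e -> exists eta, 0 < eta /\
  forall y, x < y < x + eta -> f x - e * (y - x) <= f y.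
Definition oslip K s t (f : R -> R) := forall x y, s <= x -> x <= y -> y <= t ->
  f x - K * (y - x) <= f y.

Lemma dini_deriv f x d : derivable_pt_lim f x d -> 0 <= d -> dini f x.
Proof.
intros H Hd e he. destruct (H e he) as [del Hdel]. exists del. split. apply cond_pos.
intros y Hy. assert (Hh : y - x <> 0) by lra.
assert (Ha : Rabs (y - x) < del) by (rewrite Rabs_pos_eq; lra).
specialize (Hdel (y - x) Hh Ha). replace (x + (y - x)) with y in Hdel by ring.
apply Rabs_def2 in Hdel. destruct Hdel as [_ H2].
assert (H3 : - e < (f y - f x) / (y - x)) by lra.
apply Rmult_lt_compat_r with (r := y - x) in H3; [|lra].
unfold Rdiv in H3. rewrite Rmult_assoc, Rinv_l in H3 by lra. lra.
Qed.

Lemma dini_min_l f x m : dini f x -> dini (fun y => Rmin (f y) m) x.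
Proof.
intros H e he. destruct (H e he) as [eta [Heta Hy]]. exists eta. split; auto.
intros y Hyy. specialize (Hy y Hyy). assert (0 <= e * (y - x)) by (apply Rmult_le_pos; lra).
unfold Rmin. destruct (Rle_dec (f x) m); destruct (Rle_dec (f y) m); lra.
Qed.

Lemma dini_min_c f x m K eta : 0 <= K -> m < f x -> 0 < eta ->
  (forall y, x < y < x + eta -> f x - K * (y - x) <= f y) -> dini (fun y => Rmin (f y) m) x.
Proof.
intros HK Hm Heta Hy e he. exists (Rmin eta ((f x - m) / (K + 1))). split.
apply Rmin_glb_lt; auto. apply Rdiv_lt_0_compat; lra.
intros y Hyy. assert (H1 := Rmin_l eta ((f x - m) / (K + 1))).
assert (H2 := Rmin_r eta ((f x - m) / (K + 1))).
specialize (Hy y ltac:(lra)).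
assert (K * (y - x) <= K * ((f x - m) / (K + 1))) by (apply Rmult_le_compat_l; lra).
assert (K * ((f x - m) / (K + 1)) < f x - m).
{ apply Rlt_le_trans with ((K+1) * ((f x - m) / (K + 1))).
  apply Rmult_lt_compat_r. apply Rdiv_lt_0_compat; lra. lra. right; field; lra. }
assert (0 <= e * (y - x)) by (apply Rmult_le_pos; lra).
unfold Rmin. destruct (Rle_dec (f x) m); destruct (Rle_dec (f y) m); lra.
Qed.

Lemma oslip_min K s t f m : 0 <= K -> oslip K s t f -> oslip K s t (fun y => Rmin (f y) m).
Proof.
intros HK H x y H1 H2 H3. specialize (H x y H1 H2 H3).
assert (0 <= K * (y - x)) by (apply Rmult_le_pos; lra).
unfold Rmin. destruct (Rle_dec (f x) m); destruct (Rle_dec (f y) m); lra.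
Qed.

Lemma ln_le_lin z : 0 < z -> ln z <= z - 1.
Proof.
intro Hz. destruct (Req_dec z 1) as [->|Hne]. rewrite ln_1; lra.
assert (H := exp_ineq1 (z - 1) ltac:(lra)).
rewrite <- (ln_exp (z - 1)). apply ln_le; lra.
Qed.

Lemma ln_lip s x y : 0 < s -> s <= x -> x <= y -> ln y - ln x <= (y - x) / s.
Proof.
intros Hs Hx Hy. rewrite <- ln_div by lra.
apply Rle_trans with (y / x - 1). apply ln_le_lin. apply Rdiv_lt_0_compat; lra.
replace (y / x - 1) with ((y - x) * / x) by (field; lra).
unfold Rdiv. apply Rmult_le_compat_l. lra. apply Rinv_le_contravar; lra.
Qed.

Lemma oslip_ln K s t f c : 0 < s -> 0 <= c -> oslip K s t f ->
  oslip (K + c / s) s t (fun y => f y - c * ln y).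
Proof.
intros Hs Hc H x y H1 H2 H3. specialize (H x y H1 H2 H3).
assert (Hl := ln_lip s x y Hs H1 H2).
assert (c * (ln y - ln x) <= c * ((y - x) / s)) by (apply Rmult_le_compat_l; lra).
replace (c * ((y - x) / s)) with (c / s * (y - x)) in H0 by (field; lra). nra.
Qed.

Lemma deriv_ln g x dg c : 0 < x -> derivable_pt_lim g x dg ->
  derivable_pt_lim (fun y => g y - c * ln y) x (dg - c / x).
Proof.
intros Hx H. replace (dg - c / x) with (dg - c * / x) by (unfold Rdiv; ring).
apply (derivable_pt_lim_minus g (mult_real_fct c ln)). exact H.
apply (derivable_pt_lim_scal ln c x). apply derivable_pt_lim_ln. exact Hx.
Qed.

Lemma abs_b a M : Rabs a <= M -> - M <= a <= M.
Proof. intro H. pose proof (Rle_abs a). pose proof (Rle_abs (- a)). rewrite Rabs_Ropp in H1. lra. Qed.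

Lemma blowup (g : R -> R) t0 d L : 0 < t0 -> 0 < d ->
  (forall s, 0 < s <= t0 -> Rabs (g s) <= L) ->
  (forall s, 0 < s <= t0 -> g s - 2 * d * ln s <= g t0 - 2 * d * ln t0) -> False.
Proof.
intros Ht Hd Hb Hm.
set (s := t0 * exp (- (L / d) - 1)).
assert (HL : 0 <= L) by (specialize (Hb t0 ltac:(lra)); pose proof (Rabs_pos (g t0)); lra).
assert (Hex : exp (- (L / d) - 1) < 1).
{ assert (exp (- (L / d) - 1) < exp 0). apply exp_increasing. assert (0 <= L / d) by (apply Rdiv_le_0_compat; lra). lra.
  rewrite exp_0 in H; exact H. }
assert (Hs : 0 < s <= t0).
{ unfold s. split. apply Rmult_lt_0_compat; auto; apply exp_pos.
  assert (0 < exp (- (L / d) - 1)) by apply exp_pos. nra. }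
specialize (Hm s Hs). unfold s in Hm at 2. rewrite ln_mult, ln_exp in Hm by (auto; apply exp_pos).
assert (H1 := Hb s Hs). assert (H2 := Hb t0 ltac:(lra)).
apply abs_b in H1. apply abs_b in H2.
replace (2 * d * (ln t0 + (- (L / d) - 1))) with (2 * d * ln t0 - 2 * L - 2 * d) in Hm by (field; lra).
lra.
Qed.
Lemma q_bnd (u : R -> R) L b x :
  (forall x y, 0 <= x <= b -> 0 <= y <= b -> Rabs (u x - u y) <= L * Rabs (x - y)) ->
  u 0 = 0 -> 0 < x <= b -> Rabs (u x / x) <= L.
Proof.
intros HL H0 Hx. specialize (HL x 0 ltac:(lra) ltac:(lra)).
rewrite H0, Rminus_0_r, Rminus_0_r, (Rabs_pos_eq x) in HL by lra.
apply abs_b in HL. apply Rabs_le.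
assert (u x / x * x = u x) by (field; lra). nra.
Qed.

Lemma q_lip (u : R -> R) L b s x y :
  (forall x y, 0 <= x <= b -> 0 <= y <= b -> Rabs (u x - u y) <= L * Rabs (x - y)) ->
  u 0 = 0 -> 0 <= L -> 0 < s -> s <= x -> x <= y -> y <= b ->
  Rabs (u y / y - u x / x) <= (2 * L / s) * (y - x).
Proof.
intros HL H0 HL0 Hs Hx Hxy Hy.
assert (HD := HL y x ltac:(lra) ltac:(lra)). rewrite (Rabs_pos_eq (y - x)) in HD by lra.
apply abs_b in HD.
assert (Hq := q_bnd u L b x HL H0 ltac:(lra)). apply abs_b in Hq.
set (D := u y - u x) in *. set (qx := u x / x) in *.
set (iy := / y). set (is := / s).
assert (Hiy : 0 < iy) by (apply Rinv_0_lt_compat; lra).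
assert (Hyi : iy <= is) by (apply Rinv_le_contravar; lra).
replace (u y / y - qx) with (D * iy - qx * ((y - x) * iy)) by (unfold D, qx, iy; field; lra).
replace (2 * L / s * (y - x)) with (2 * L * (y - x) * is) by (unfold is; field; lra).
assert (p1 : 0 <= (L*(y-x) - D) * iy) by (apply Rmult_le_pos; lra).
assert (p2 : 0 <= (L*(y-x) + D) * iy) by (apply Rmult_le_pos; lra).
assert (0 <= (y - x) * iy) by (apply Rmult_le_pos; lra).
assert (p3 : 0 <= (L - qx) * ((y-x)*iy)) by (apply Rmult_le_pos; lra).
assert (p4 : 0 <= (L + qx) * ((y-x)*iy)) by (apply Rmult_le_pos; lra).
assert (p5 : 0 <= (L*(y-x)) * (is - iy)) by (apply Rmult_le_pos; nra).
apply Rabs_le. split; lra.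
Qed.

Lemma q_deriv (u rho : R -> R) lambda x du : 0 < x < 1 ->
  derivable_pt_lim u x du ->
  du = - ((1 / x + rho_tilde rho x) * u x + lambda * zeta x) ->
  derivable_pt_lim (fun y => u y / y) x
    (- (zeta x / x) * ((1 + x * (rho x / zeta x)) * (u x / x) + lambda)).
Proof.
intros Hx Hu Hdu.
assert (H := derivable_pt_lim_div u id x _ _ Hu (derivable_pt_lim_id x) ltac:(unfold id; lra)).
assert (H1 : 1 - x^2 <> 0) by nra.
assert (Hz : zeta x <> 0) by (unfold zeta; unfold Rdiv; apply Rmult_integral_contrapositive_currified; [lra| apply Rinv_neq_0_compat; lra]).
replace (- (zeta x / x) * ((1 + x * (rho x / zeta x)) * (u x / x) + lambda))
  with ((du * id x - 1 * u x) / (id x)²).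
exact H.
rewrite Hdu. unfold id, Rsqr, rho_tilde. unfold zeta in *. field. split; lra.
Qed.
Lemma geom_sum n : sum_f_R0 (fun k => (/2)^k) n = 2 - 2 * (/2)^(S n).
Proof. induction n. simpl; lra. simpl sum_f_R0. rewrite IHn. simpl. lra. Qed.

Lemma mono s t K f N : s <= t -> 0 <= K -> null_set N -> oslip K s t f ->
  (forall x, s <= x < t -> ~ N x -> dini f x) -> f s <= f t.
Proof.
intros Hst HK HN Hl Hd.
apply Rnot_lt_le; intro Hlt.
set (e := (f s - f t) / (2 * (t - s + 6*K + 1))).
assert (he : 0 < e) by (unfold e; apply Rdiv_lt_0_compat; lra).
assert (heX : e * (2 * (t - s + 6*K + 1)) = f s - f t) by (unfold e; field; lra).
destruct (HN e he) as (a & c & Hac & Hcov & Hsum).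
set (c' := fun k => c k + e * (/2)^k).
set (clip := fun k y => Rmax 0 (Rmin y (c' k) - Rmax s (a k))).
set (bb := fun k => c' k - a k).
assert (Hpow : forall k, 0 < (/2)^k) by (intro; apply pow_lt; lra).
assert (Hcc : forall k, c k < c' k).
{ intro k. unfold c'. specialize (Hpow k). assert (0 < e * (/2)^k) by (apply Rmult_lt_0_compat; lra). lra. }
assert (Hbb0 : forall k, 0 <= bb k) by (intro k; unfold bb; specialize (Hac k); specialize (Hcc k); lra).
assert (Hbbs : forall n, sum_f_R0 bb n <= 3*e).
{ intro n. unfold bb, c'.
  rewrite (sum_eq _ (fun k => (c k - a k) + e * (/2)^k)) by (intros; cbv beta; ring).
  rewrite sum_plus. specialize (Hsum n).
  rewrite (sum_eq (fun k => e * (/2)^k) (fun k => (/2)^k * e)) by (intros; ring).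
  rewrite <- scal_sum, geom_sum.
  assert (0 < (/2)^(S n)) by apply Hpow.
  assert (0 < e * (/2)^(S n)) by (apply Rmult_lt_0_compat; lra). nra. }
assert (Hclip0 : forall k y, 0 <= clip k y <= bb k).
{ intros k y. unfold clip, bb. specialize (Hac k); specialize (Hcc k).
  split. apply Rmax_l. apply Rmax_lub. lra.
  assert (Rmin y (c' k) <= c' k) by apply Rmin_r.
  assert (a k <= Rmax s (a k)) by apply Rmax_r. lra. }
assert (Hclipm : forall k y w, y <= w -> clip k y <= clip k w).
{ intros k y w Hyw. unfold clip. apply Rmax_lub. apply Rmax_l.
  apply Rle_trans with (Rmin w (c' k) - Rmax s (a k)); [|apply Rmax_r].
  assert (Rmin y (c' k) <= Rmin w (c' k)).
  { unfold Rmin. destruct (Rle_dec y (c' k)); destruct (Rle_dec w (c' k)); lra. }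
  lra. }
assert (Hex : forall y, ex_series (fun k => clip k y)).
{ intro y. apply ex_series_bound with (3*e). intro k; apply Hclip0.
  intro n. apply Rle_trans with (sum_f_R0 bb n); [|apply Hbbs].
  apply sum_Rle. intros; apply Hclip0. }
set (Phi := fun y => Series (fun k => clip k y)).
assert (Hphib : forall y, 0 <= Phi y <= 3 * e).
{ intro y. split.
  - apply Rle_trans with (clip 0%nat y). apply Hclip0. apply (series_ge_term (fun k => clip k y)). intro; apply Hclip0. apply Hex.
  - apply Rle_trans with (Series bb). apply Series_le. intro; apply Hclip0.
    apply ex_series_bound with (3*e); auto.
    apply series_le_bound; auto. lra. }
assert (Hphi_inc : forall n y w, y <= w -> clip n w - clip n y <= Phi w - Phi y).
{ intros n y w Hyw. unfold Phi. rewrite <- Series_minus by apply Hex.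
  apply (series_ge_term (fun k => clip k w - clip k y)).
  intro k; specialize (Hclipm k y w Hyw); lra.
  apply (ex_series_minus (fun k => clip k w) (fun k => clip k y)); apply Hex. }
assert (Hphim : forall y w, y <= w -> Phi y <= Phi w).
{ intros y w Hyw. specialize (Hphi_inc 0%nat y w Hyw). specialize (Hclipm 0%nat y w Hyw). lra. }
assert (Hstep : forall n z w, a n <= z -> s <= z -> z < w -> w <= c' n -> clip n w - clip n z = w - z).
{ intros n z w H1 H2 H3 H4. unfold clip.
  rewrite (Rmin_left w) by lra. rewrite (Rmin_left z) by lra.
  assert (Rmax s (a n) <= z) by (apply Rmax_lub; lra).
  rewrite (Rmax_right 0 (w - Rmax s (a n))) by lra.
  rewrite (Rmax_right 0 (z - Rmax s (a n))) by lra. ring. }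
set (C := fun y => f s <= f y + e*(y-s) + 2*K*Phi y).
set (E := fun y => s <= y <= t /\ forall w, s <= w <= y -> C w).
assert (HEs : E s).
{ split. lra. intros w Hw. replace w with s by lra. unfold C.
  specialize (Hphib s). assert (0 <= K * Phi s) by (apply Rmult_le_pos; lra). lra. }
destruct (completeness E) as [z [Hub Hlub]].
{ exists t. intros y [Hy _]. lra. }
{ exists s. exact HEs. }
assert (Hsz : s <= z) by (apply Hub; exact HEs).
assert (Hzt : z <= t) by (apply Hlub; intros y [Hy _]; lra).
assert (Hbelow : forall w, s <= w < z -> C w).
{ intros w Hw. destruct (classic (exists y, E y /\ w < y)) as [[y [[_ Ey] Hwy]]|Hno].
  - apply Ey. lra.
  - exfalso. assert (z <= w). apply Hlub. intros y Ey. apply Rnot_lt_le. intro. apply Hno. exists y. auto. lra. }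
assert (HCz : C z).
{ destruct (Req_dec z s) as [Hzs|Hzs]. rewrite Hzs. apply HEs. lra.
  apply Rnot_lt_le. intro Hc.
  set (eta := f s - (f z + e*(z-s) + 2*K*Phi z)).
  set (d := Rmin (z - s) (eta / (2*(K+1)))).
  assert (Hd0 : 0 < d). { unfold d. apply Rmin_glb_lt. lra. apply Rdiv_lt_0_compat; unfold eta; lra. }
  assert (Hd1 : d <= z - s) by apply Rmin_l.
  assert (Hd2 : d <= eta / (2*(K+1))) by apply Rmin_r.
  set (w := z - d).
  assert (Cw : C w) by (apply Hbelow; unfold w; lra).
  assert (Hfw : f w - K * (z - w) <= f z) by (apply Hl; unfold w; lra).
  assert (Hpw : Phi w <= Phi z) by (apply Hphim; unfold w; lra).
  assert (K * Phi w <= K * Phi z) by (apply Rmult_le_compat_l; lra).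
  assert (K * d <= K * (eta / (2*(K+1)))) by (apply Rmult_le_compat_l; lra).
  assert (K * (eta / (2*(K+1))) < eta).
  { apply Rlt_le_trans with ((K+1) * (eta / (2*(K+1)))).
    apply Rmult_lt_compat_r. apply Rdiv_lt_0_compat; unfold eta; lra. lra.
    replace ((K+1) * (eta / (2*(K+1)))) with (eta/2) by (field; lra).
    assert (0 < eta) by (unfold eta; lra). lra. }
  unfold C, w in *. assert (e * (z - d - s) <= e * (z - s)) by (apply Rmult_le_compat_l; lra).
  unfold eta in *. lra. }
assert (Hzt2 : z = t).
{ destruct (Req_dec z t) as [|Hne]; auto. exfalso.
  assert (Heta : exists eta, 0 < eta /\ forall w, z < w < z + eta -> w <= t -> C w).
  { destruct (classic (N z)) as [Nz|Nz].
    - destruct (Hcov z Nz) as [n Hn]. exists (c' n - z). split. specialize (Hcc n). lra.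
      intros w Hw Hwt. specialize (Hphi_inc n z w ltac:(lra)).
      rewrite Hstep in Hphi_inc by lra.
      assert (Hfw : f z - K * (w - z) <= f w) by (apply Hl; lra).
      unfold C in *. 
      assert (K * (w - z) <= K * (Phi w - Phi z)) by (apply Rmult_le_compat_l; lra).
      assert (e * (z - s) <= e * (w - s)) by (apply Rmult_le_compat_l; lra).
      nra.
    - destruct (Hd z ltac:(lra) Nz e he) as [eta [Heta Hy]]. exists eta. split; auto.
      intros w Hw Hwt. specialize (Hy w Hw). unfold C in *.
      assert (K * Phi z <= K * Phi w) by (apply Rmult_le_compat_l; [lra| apply Hphim; lra]).
      lra. }
  destruct Heta as [eta [Heta HC]].
  set (w0 := z + Rmin eta (t - z) / 2).
  assert (0 < Rmin eta (t - z)) by (apply Rmin_glb_lt; lra).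
  assert (Rmin eta (t - z) <= eta) by apply Rmin_l.
  assert (Rmin eta (t - z) <= t - z) by apply Rmin_r.
  assert (E w0).
  { split. unfold w0; lra. intros w Hw.
    destruct (Rle_or_lt w z). destruct (Req_dec w z). subst w; auto. apply Hbelow; lra.
    apply HC; unfold w0 in *; lra. }
  assert (w0 <= z) by (apply Hub; auto). unfold w0 in *. lra. }
subst z. unfold C in HCz. specialize (Hphib t).
assert (K * Phi t <= K * (3*e)) by (apply Rmult_le_compat_l; lra).
nra.
Qed.
Lemma notN a b N : null_set N -> a < b -> exists x, a < x < b /\ ~ N x.
Proof.
intros HN Hab. apply NNPP. intro H.
assert (Hall : forall x, a < x < b -> N x).
{ intros x Hx. apply NNPP. intro Nx. apply H. exists x. auto. }
assert (Hm := mono ((3*a+b)/4) ((a+3*b)/4) 1 (fun y => - y) N ltac:(lra) ltac:(lra) HN).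
assert (- ((3*a+b)/4) <= - ((a+3*b)/4)).
{ apply Hm. intros x y _ _ _. lra. intros x Hx Nx. exfalso. apply Nx. apply Hall. lra. }
lra.
Qed.

Theorem mainTheorem16
  (b : R) (rho u : R -> R) (lambda : R)
  (hb : 0 < b < 1)
  (hrho_nonneg : forall t, 0 <= t <= b -> 0 <= rho t)
  (hrho_mono : forall s t, 0 <= s <= b -> 0 <= t <= b -> s <= t ->
                 rho s / zeta s <= rho t / zeta t)
  (hrho_bdd : exists M, forall t, 0 <= t <= b -> Rabs (rho t / zeta t) <= M)
  (hu_lip : lipschitz_on 0 b u)
  (hu_ode : exists N : R -> Prop, null_set N /\
              forall x, 0 < x < b -> ~ N x ->
                derivable_pt_lim u x
                  (- ((1 / x + rho_tilde rho x) * u x + lambda * zeta x)))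
  (hu0 : u 0 = 0) (hub : u b = 1) :
  (forall t, 0 <= t <= b -> u t >= t / b) /\
  ((exists t, 0 <= t < b /\ rho t <> 0) ->
     forall t, 0 < t < b -> u t > t / b).
Proof.
destruct hu_lip as [L HL]. destruct hu_ode as [N [HN Hode]].
assert (HLpos : 0 < L).
{ specialize (HL b 0 ltac:(lra) ltac:(lra)). rewrite hub, hu0, !Rminus_0_r in HL.
  rewrite Rabs_R1, Rabs_pos_eq in HL by lra. nra. }
set (q := fun x => u x / x).
set (r := fun x => rho x / zeta x).
set (P := fun x => (1 + x * r x) * q x + lambda).
assert (Hzeta : forall x, 0 <= x < 1 -> 2 <= zeta x).
{ intros x Hx. unfold zeta. assert (0 < 1 - x^2 <= 1) by nra.
  assert (/1 <= /(1 - x^2)) by (apply Rinv_le_contravar; lra). rewrite Rinv_1 in H0.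
  unfold Rdiv. lra. }
assert (Hr0 : forall x, 0 <= x <= b -> 0 <= r x).
{ intros x Hx. unfold r. apply Rdiv_le_0_compat. auto. assert (2 <= zeta x) by (apply Hzeta; lra). lra. }
assert (Hqb : forall x, 0 < x <= b -> Rabs (q x) <= L) by (intros; apply (q_bnd u L b); auto).
assert (Hqlip : forall s x y, 0 < s -> s <= x -> x <= y -> y <= b -> Rabs (q y - q x) <= (2*L/s)*(y-x))
  by (intros; apply (q_lip u L b); auto; lra).
assert (HK : forall s, 0 < s -> 0 <= 2 * L / s) by (intros; apply Rdiv_le_0_compat; lra).
assert (Hosl : forall s t, 0 < s -> t <= b -> oslip (2*L/s) s t q).
{ intros s t Hs Ht x y H1 H2 H3. specialize (Hqlip s x y Hs H1 H2 ltac:(lra)). apply abs_b in Hqlip. lra. }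
assert (Hosln : forall s t, 0 < s -> t <= b -> oslip (2*L/s) s t (fun y => - q y)).
{ intros s t Hs Ht x y H1 H2 H3. specialize (Hqlip s x y Hs H1 H2 ltac:(lra)). apply abs_b in Hqlip. lra. }
assert (Hdq : forall x, 0 < x < b -> ~ N x -> derivable_pt_lim q x (- (zeta x / x) * P x)).
{ intros x Hx Nx. apply (q_deriv u rho lambda x _ ltac:(lra) (Hode x Hx Nx)). reflexivity. }
assert (Hzx : forall x, 0 < x < b -> 0 <= zeta x / x).
{ intros x Hx. apply Rdiv_le_0_compat. assert (2 <= zeta x) by (apply Hzeta; lra). lra. lra. }
assert (Hdpos : forall x, 0 < x < b -> ~ N x -> P x <= 0 -> dini q x).
{ intros x Hx Nx HPx. apply (dini_deriv q x _ (Hdq x Hx Nx)).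
  specialize (Hzx x Hx). nra. }
assert (Hdneg : forall x, 0 < x < b -> ~ N x -> 0 <= P x -> dini (fun y => - q y) x).
{ intros x Hx Nx HPx. apply (dini_deriv (fun y => - q y) x (- (- (zeta x / x) * P x))).
  apply (derivable_pt_lim_opp q). apply Hdq; auto.
  specialize (Hzx x Hx). nra. }
assert (Hqb1 : q b = 1 / b) by (unfold q; rewrite hub; reflexivity).
assert (Hlam : lambda <= 0).
{ apply Rnot_lt_le; intro Hl.
  assert (Ha : forall s, 0 < s <= b -> 1 / b <= q s).
  { intros s Hs.
    assert (H := mono s b (2*L/s) (fun y => Rmin (- q y) 0) N ltac:(lra) (HK s ltac:(lra)) HN).
    simpl in H. rewrite Hqb1 in H.
    assert (Hb1 : 0 < 1 / b) by (apply Rdiv_lt_0_compat; lra).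
    rewrite (Rmin_left (- (1/b))) in H by lra.
    assert (Rmin (- q s) 0 <= - (1 / b)).
    { apply H. apply oslip_min. apply HK; lra. apply Hosln; lra.
      intros x Hx Nx. destruct (Rlt_or_le (q x) 0) as [Hq|Hq].
      - apply (dini_min_c _ x 0 (2*L/s) (b - x)). apply HK; lra. lra. lra.
        intros y Hy. apply (Hosln s b); lra.
      - apply dini_min_l. apply Hdneg; try lra; auto.
        unfold P. assert (0 <= r x) by (apply Hr0; lra).
        assert (0 <= (1 + x * r x) * q x) by (apply Rmult_le_pos; nra). lra. }
    unfold Rmin in H0. destruct (Rle_dec (- q s) 0); lra. }
  apply (blowup (fun y => - q y) b lambda L). lra. lra.
  intros s Hs. rewrite Rabs_Ropp. apply Hqb; auto.
  intros s Hs.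
  apply (mono s b (2*L/s + 2*lambda/s) (fun y => - q y - 2 * lambda * ln y) N ltac:(lra)).
  assert (0 <= 2 * lambda / s) by (apply Rdiv_le_0_compat; lra). specialize (HK s ltac:(lra)). lra.
  exact HN.
  apply oslip_ln. lra. lra. apply Hosln; lra.
  intros x Hx Nx.
  apply (dini_deriv _ x (- (- (zeta x / x) * P x) - 2 * lambda / x)).
  apply deriv_ln. lra. apply (derivable_pt_lim_opp q). apply Hdq; auto; lra.
  assert (Hqx := Ha x ltac:(lra)).
  assert (2 <= zeta x) by (apply Hzeta; lra).
  assert (HPx : lambda <= P x).
  { unfold P. assert (0 <= r x) by (apply Hr0; lra).
    assert (0 < 1 / b) by (apply Rdiv_lt_0_compat; lra).
    assert (0 <= (1 + x * r x) * q x) by (apply Rmult_le_pos; nra). lra. }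
  replace (- (- (zeta x / x) * P x) - 2 * lambda / x) with ((zeta x * P x - 2 * lambda) / x)
    by (field; lra).
  apply Rdiv_le_0_compat. nra. lra. }
assert (HP : forall t0, 0 < t0 < b -> 0 <= P t0).
{ intros t0 Ht0. apply Rnot_lt_le; intro HPt.
  set (c := q t0). set (A := 1 + t0 * r t0).
  assert (HA : 1 <= A) by (unfold A; assert (0 <= r t0) by (apply Hr0; lra); nra).
  set (m2 := - lambda / A).
  assert (HmA : m2 * A = - lambda) by (unfold m2; field; lra).
  assert (HPt' : A * c + lambda < 0) by exact HPt.
  assert (Hcm : c < m2) by nra.
  assert (Hfac : forall s, 0 < s <= t0 -> 1 <= 1 + s * r s <= A).
  { intros s Hs. assert (0 <= r s) by (apply Hr0; lra).
    assert (r s <= r t0) by (apply hrho_mono; lra). unfold A. nra. }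
  assert (Hc1 : forall s, 0 < s <= t0 -> q s <= m2 -> P s <= 0).
  { intros s Hs Hq. specialize (Hfac s Hs). unfold P.
    destruct (Rle_or_lt 0 (q s)); nra. }
  assert (Ha : forall s, 0 < s <= t0 -> q s <= c).
  { intros s Hs.
    assert (H := mono s t0 (2*L/s) (fun y => Rmin (q y) m2) N ltac:(lra) (HK s ltac:(lra)) HN).
    simpl in H. fold c in H. rewrite (Rmin_left c) in H by lra.
    assert (Rmin (q s) m2 <= c).
    { apply H. apply oslip_min. apply HK; lra. apply Hosl; lra.
      intros x Hx Nx. destruct (Rlt_or_le m2 (q x)) as [Hq|Hq].
      - apply (dini_min_c _ x m2 (2*L/s) (t0 - x)). apply HK; lra. lra. lra.
        intros y Hy. apply (Hosl s t0); lra.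
      - apply dini_min_l. apply Hdpos; try lra; auto. apply Hc1; lra. }
    unfold Rmin in H0. destruct (Rle_dec (q s) m2); lra. }
  set (d := - lambda - Rmax (A * c) c).
  assert (Hd : 0 < d).
  { unfold d. destruct (Rle_or_lt 0 c).
    rewrite Rmax_left by nra. lra.
    rewrite Rmax_right by nra. lra. }
  assert (Hd2 : forall s, 0 < s <= t0 -> d <= - P s).
  { intros s Hs. specialize (Hfac s Hs). specialize (Ha s Hs).
    assert (H1 := Rmax_l (A * c) c). assert (H2 := Rmax_r (A * c) c).
    unfold d, P. destruct (Rle_or_lt 0 (q s)); nra. }
  apply (blowup q t0 d L). lra. lra.
  intros s Hs. apply Hqb; lra.
  intros s Hs.
  apply (mono s t0 (2*L/s + 2*d/s) (fun y => q y - 2 * d * ln y) N ltac:(lra)).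
  assert (0 <= 2 * d / s) by (apply Rdiv_le_0_compat; lra). specialize (HK s ltac:(lra)). lra.
  exact HN.
  apply oslip_ln. lra. lra. apply Hosl; lra.
  intros x Hx Nx.
  apply (dini_deriv _ x (- (zeta x / x) * P x - 2 * d / x)).
  apply deriv_ln. lra. apply Hdq; auto; lra.
  assert (2 <= zeta x) by (apply Hzeta; lra).
  specialize (Hd2 x ltac:(lra)).
  replace (- (zeta x / x) * P x - 2 * d / x) with ((zeta x * (- P x) - 2 * d) / x)
    by (field; lra).
  apply Rdiv_le_0_compat. nra. lra. }
assert (Hmono : forall t t', 0 < t -> t <= t' -> t' <= b -> q t' <= q t).
{ intros t t' Ht Htt Ht'.
  assert (H := mono t t' (2*L/t) (fun y => - q y) N Htt (HK t Ht) HN (Hosln t t' Ht Ht')).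
  cut (- q t <= - q t'). lra. apply H.
  intros x Hx Nx. apply Hdneg; try lra; auto. apply HP; lra. }
assert (Hb1 : 0 < 1 / b) by (apply Rdiv_lt_0_compat; lra).
assert (Hut : forall t, 0 < t -> u t = t * q t) by (intros; unfold q; field; lra).
split.
- intros t Ht. apply Rle_ge. destruct (Req_dec t 0) as [->|Ht0].
  rewrite hu0. unfold Rdiv. lra.
  rewrite Hut by lra. assert (q b <= q t) by (apply Hmono; lra).
  replace (t / b) with (t * (1 / b)) by (field; lra).
  apply Rmult_le_compat_l; lra.
- intros [t1 [Ht1 Hrho1]] t Ht.
  assert (Hr1 : 0 < r t1).
  { unfold r. apply Rdiv_lt_0_compat. assert (0 <= rho t1) by (apply hrho_nonneg; lra). lra.
    assert (2 <= zeta t1) by (apply Hzeta; lra). lra. }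
  apply Rnot_le_lt. intro Hle.
  assert (Hqt : q t <= 1 / b).
  { rewrite Hut in Hle by lra. replace (t / b) with (t * (1 / b)) in Hle by (field; lra).
    apply Rmult_le_reg_l with t; lra. }
  set (tau := Rmax t t1).
  assert (Htau1 : t <= tau) by apply Rmax_l.
  assert (Htau2 : t1 <= tau) by apply Rmax_r.
  assert (Htau3 : tau < b) by (unfold tau, Rmax; destruct (Rle_dec t t1); lra).
  assert (Hconst : forall s, tau <= s <= b -> q s = 1 / b).
  { intros s Hs. assert (q b <= q s) by (apply Hmono; lra).
    assert (q s <= q tau) by (apply Hmono; lra).
    assert (q tau <= q t) by (apply Hmono; lra). lra. }
  assert (HP0 : forall p, tau < p < b -> ~ N p -> P p = 0).
  { intros p Hp Np. assert (H0 := HP p ltac:(lra)).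
    destruct H0 as [Hpos|]; auto. exfalso.
    assert (Hz2 : 2 <= zeta p) by (apply Hzeta; lra).
    assert (HD : - (zeta p / p) * P p < 0).
    { assert (0 < zeta p / p) by (apply Rdiv_lt_0_compat; lra). nra. }
    destruct (Hdq p ltac:(lra) Np (- (- (zeta p / p) * P p)) ltac:(lra)) as [del Hdel].
    set (h := Rmin del (b - p) / 2).
    assert (0 < Rmin del (b - p)) by (apply Rmin_glb_lt; [apply cond_pos|lra]).
    assert (Rmin del (b - p) <= del) by apply Rmin_l.
    assert (Rmin del (b - p) <= b - p) by apply Rmin_r.
    specialize (Hdel h ltac:(unfold h; lra) ltac:(rewrite Rabs_pos_eq; unfold h; lra)).
    rewrite (Hconst (p + h)) in Hdel by (unfold h; lra).
    rewrite (Hconst p) in Hdel by lra.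
    replace ((1 / b - 1 / b) / h - - (zeta p / p) * P p) with (- (- (zeta p / p) * P p)) in Hdel
      by (unfold h; field; lra).
    rewrite Rabs_Ropp, Rabs_left in Hdel by lra. lra. }
  destruct (notN tau ((tau + b)/2) N HN ltac:(lra)) as [p1 [Hp1 Np1]].
  destruct (notN ((tau + b)/2) b N HN ltac:(lra)) as [p2 [Hp2 Np2]].
  assert (E1 := HP0 p1 ltac:(lra) Np1). assert (E2 := HP0 p2 ltac:(lra) Np2).
  unfold P in E1, E2. rewrite (Hconst p1) in E1 by lra. rewrite (Hconst p2) in E2 by lra.
  assert (Hrp1 : r t1 <= r p1) by (apply hrho_mono; lra).
  assert (Hrp12 : r p1 <= r p2) by (apply hrho_mono; lra).
  assert (Heq : p1 * r p1 = p2 * r p2).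
  { assert (X : (1 + p1 * r p1) * (1 / b) = (1 + p2 * r p2) * (1 / b)) by lra.
    apply Rmult_eq_reg_r in X; lra. }
  nra.
Qed.
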